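(* Let $x^{(0)}\in\mathbb R^n$, $h_0:=H(x^{(0)})$, let $\epsilon>0$ be small, and let $t_\epsilon$ be the unique solution of $f(t_\epsilon)=\epsilon$, where $f(t)=\frac1{h_0}\tanh(\frac{h_0t}2)$ if $h_0\ne0$ and $f(t)=t/2$ if $h_0=0$. Let $x(t)$ be the solution of $\dot x_i=x_i\big(\sum_{j>i}a_jx_j-\sum_{j<i}a_jx_j\big)$ with $x(0)=x^{(0)}$. Then $x(t_\epsilon)=\mathcal K(x^{(0)})$. Consequently, since $t_\epsilon$ depends on $x^{(0)}$ only through $H(x^{(0)})$ (which is preserved by $\mathcal K$), the $m$-th iterate satisfies $\mathcal K^m(x^{(0)})=x(mt_\epsilon)$ for all $m\ge0$, and every first integral of the continuous system is invariant under $\mathcal K$.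
   Context: $(a_1,\dots,a_n)\in\mathbb R^n\setminus\{0\}$, $H=a_1x_1+\dots+a_nx_n$, $v_0:=0$, $v_i:=a_1x_1+\dots+a_ix_i$. $\mathcal K$ is the Kahan map with step size $2\epsilon$: $\tilde x_i=x_i\dfrac{(1-\epsilon H)(1+\epsilon H)}{(1-\epsilon H+2\epsilon v_{i-1})(1-\epsilon H+2\epsilon v_i)}$, $i=1,\dots,n$ (points where denominators vanish or the solution ceases to exist are excluded). *)

(* Defs.v *)
From Stdlib Require Import Reals Lra.
Open Scope R_scope.

(* Vectors in R^n are represented as functions nat -> R; only the
   coordinates with index i < n (0-based: paper's x_{i+1}) are meaningful. *)

Fixpoint psum (f : nat -> R) (k : nat) : R :=
  match k with
  | O => 0
  | S k' => psum f k' + f k'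
  end.

Definition Hf (n : nat) (a x : nat -> R) : R := psum (fun j => a j * x j) n.

Definition vpart (a x : nat -> R) (k : nat) : R := psum (fun j => a j * x j) k.

Definition kden (eps : R) (n : nat) (a x : nat -> R) (k : nat) : R :=
  1 - eps * Hf n a x + 2 * eps * vpart a x k.

(* Kahan map with step size 2 eps; component i (0-based) is the paper's
   component i+1, whose denominator is (..v_{i})(..v_{i+1}) in 0-based
   partial sums, i.e. paper's v_{(i+1)-1} and v_{i+1}. *)
Definition kahan (eps : R) (n : nat) (a x : nat -> R) : nat -> R :=
  fun i => x i * ((1 - eps * Hf n a x) * (1 + eps * Hf n a x))
           / (kden eps n a x i * kden eps n a x (S i)).

Definition kahan_defined (eps : R) (n : nat) (a x : nat -> R) : Prop :=
  forall k, (k <= n)%nat -> kden eps n a x k <> 0.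

(* Vector field: xdot_i = x_i (sum_{j>i} a_j x_j - sum_{j<i} a_j x_j) *)
Definition vfield (n : nat) (a x : nat -> R) (i : nat) : R :=
  x i * ((Hf n a x - vpart a x (S i)) - vpart a x i).

(* x solves the ODE at every time t in [0, T] (two-sided derivative; the
   solution exists on an open interval containing [0, T]). *)
Definition ode_sol (n : nat) (a : nat -> R) (x : R -> nat -> R) (T : R) : Prop :=
  forall t, 0 <= t <= T -> forall i, (i < n)%nat ->
    derivable_pt_lim (fun s => x s i) t (vfield n a (x t) i).

Definition veq (n : nat) (y z : nat -> R) : Prop := forall i, (i < n)%nat -> y i = z i.

Definition ftime (h t : R) : R :=
  if Req_EM_T h 0 then t / 2 else tanh (h * t / 2) / h.

(* A first integral of the continuous system: a function on R^n (depending
   only on the n meaningful coordinates) that is constant along solutions. *)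
Definition first_integral (n : nat) (a : nat -> R) (I : (nat -> R) -> R) : Prop :=
  (forall y z, veq n y z -> I y = I z) /\
  (forall (y : R -> nat -> R) (T : R), 0 <= T -> ode_sol n a y T -> I (y T) = I (y 0)).

(* Main.v *)
Require Import Defs.
From Stdlib Require Import Reals Lra Psatz.
Open Scope R_scope.

Lemma dmul f g t df dg : derivable_pt_lim f t df -> derivable_pt_lim g t dg ->
  derivable_pt_lim (fun s => f s * g s) t (df * g t + f t * dg).
Proof. intros Hf Hg. exact (derivable_pt_lim_mult f g t df dg Hf Hg). Qed.
Lemma dadd f g t df dg : derivable_pt_lim f t df -> derivable_pt_lim g t dg ->
  derivable_pt_lim (fun s => f s + g s) t (df + dg).
Proof. intros Hf Hg. exact (derivable_pt_lim_plus f g t df dg Hf Hg). Qed.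
Lemma dsub f g t df dg : derivable_pt_lim f t df -> derivable_pt_lim g t dg ->
  derivable_pt_lim (fun s => f s - g s) t (df - dg).
Proof. intros Hf Hg. exact (derivable_pt_lim_minus f g t df dg Hf Hg). Qed.
Lemma dconst c t : derivable_pt_lim (fun _ => c) t 0.
Proof. exact (derivable_pt_lim_const c t). Qed.
Lemma did t : derivable_pt_lim (fun s => s) t 1.
Proof. exact (derivable_pt_lim_id t). Qed.
Lemma dext f g t l l' : (forall s, f s = g s) -> l = l' -> derivable_pt_lim f t l -> derivable_pt_lim g t l'.
Proof. intros E El H. subst l'. intros e he. destruct (H e he) as [d Hd]. exists d.
  intros h h0 hd. rewrite <- !E. apply Hd; auto. Qed.
Lemma dcont f t l : derivable_pt_lim f t l -> continuity_pt f t.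
Proof. intro H. apply derivable_continuous_pt. exists l. exact H. Qed.

Lemma gronwall (E g : R -> R) (T : R) :
  (forall t, 0 <= t <= T -> derivable_pt_lim E t (g t * E t)) ->
  (forall t, 0 <= t <= T -> continuity_pt g t) ->
  E 0 = 0 -> forall t, 0 <= t <= T -> E t = 0.
Proof.
  intros HE Hg E0 t Ht.
  destruct (Req_dec t 0) as [->|tn0]; [exact E0|].
  assert (T0 : 0 <= T) by lra.
  destruct (continuity_ab_maj g 0 T T0 Hg) as [c [Hc _]].
  set (M := g c).
  set (F := fun s => E s * E s * exp (- (2 * M) * s)).
  set (F' := fun s => (g s * E s * E s + E s * (g s * E s)) * exp (- (2*M) * s)
                      + E s * E s * (exp (- (2*M) * s) * (- (2*M)))).
  destruct (MVT_cor2 F F' 0 t) as [z [Hz Hz2]]; [lra| |].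
  { intros z Hz. unfold F, F'.
    assert (Hx : derivable_pt_lim (fun s => exp (- (2*M) * s)) z (exp (- (2*M) * z) * (- (2*M)))).
    { apply dext with (f := comp exp (fun s => - (2*M) * s)) (l := exp (- (2*M) * z) * (0 * z + - (2*M) * 1)).
      intros; reflexivity. ring.
      apply derivable_pt_lim_comp. apply (derivable_pt_lim_mult (fun _ => - (2*M)) (fun s => s)).
      apply derivable_pt_lim_const. apply derivable_pt_lim_id. apply derivable_pt_lim_exp. }
    assert (HEz : derivable_pt_lim E z (g z * E z)) by (apply HE; lra).
    exact (dmul _ _ z _ _ (dmul _ _ z _ _ HEz HEz) Hx). }
  assert (F0 : F 0 = 0) by (unfold F; rewrite E0; ring).
  assert (Fz : F' z <= 0).
  { unfold F'. assert (g z <= M) by (apply Hc; lra).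
    pose proof (exp_pos (- (2*M) * z)).
    assert (E z * E z * exp (- (2 * M) * z) * (g z - M) <= 0).
    { assert (0 <= E z * E z * exp (- (2 * M) * z)) by (apply Rmult_le_pos; nra). nra. }
    nra. }
  assert (Ft : F t <= 0) by nra.
  unfold F in Ft. pose proof (exp_pos (- (2*M) * t)).
  assert (E t * E t <= 0).
  { destruct (Rle_dec (E t * E t) 0); auto. exfalso. nra. }
  nra.
Qed.

Lemma cosh_pos' y : 0 < cosh y.
Proof. unfold cosh. pose proof (exp_pos y). pose proof (exp_pos (-y)). lra. Qed.

Lemma ftime_0 h : ftime h 0 = 0.
Proof. unfold ftime. destruct (Req_EM_T h 0). lra.
  assert (E : h * 0 / 2 = 0) by lra. rewrite E. unfold tanh. rewrite sinh_0. unfold Rdiv. ring. Qed.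

Lemma ftime_bound h t : -1 < h * ftime h t < 1.
Proof.
  unfold ftime. destruct (Req_EM_T h 0) as [->|hn]. lra.
  replace (h * (tanh (h * t / 2) / h)) with (tanh (h * t / 2)) by (field; auto).
  set (y := h * t / 2). unfold tanh.
  pose proof (cosh_pos' y). set (q := sinh y / cosh y).
  assert (E : sinh y = q * cosh y) by (unfold q; field; lra).
  assert (-cosh y < sinh y < cosh y).
  { unfold sinh, cosh. pose proof (exp_pos y). pose proof (exp_pos (-y)). lra. }
  split; nra.
Qed.

Lemma ftime_deriv h t : derivable_pt_lim (ftime h) t ((1 - h^2 * ftime h t ^ 2) / 2).
Proof.
  unfold ftime. destruct (Req_EM_T h 0) as [->|hn].
  - apply dext with (f := fun s => s * (/2)) (l := 1 * (/2) + t * 0).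
    intros; unfold Rdiv; ring. field.
    exact (dmul _ _ t _ _ (did t) (dconst (/2) t)).
  - set (u := fun s => h * s / 2).
    assert (Hu : forall z, derivable_pt_lim u z (h/2)).
    { intro z. apply dext with (f := fun s => h * s * (/2)) (l := (0 * z + h * 1) * (/2) + h * z * 0).
      intros; unfold u, Rdiv; ring. field.
      exact (dmul _ _ z _ _ (dmul _ _ z _ _ (dconst h z) (did z)) (dconst (/2) z)). }
    assert (Hs : derivable_pt_lim (comp sinh u) t (cosh (u t) * (h/2))).
    { apply derivable_pt_lim_comp. apply Hu. apply derivable_pt_lim_sinh. }
    assert (Hc : derivable_pt_lim (comp cosh u) t (sinh (u t) * (h/2))).
    { apply derivable_pt_lim_comp. apply Hu. apply derivable_pt_lim_cosh. }
    pose proof (cosh_pos' (u t)).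
    pose proof (derivable_pt_lim_div _ _ t _ _ Hs Hc ltac:(unfold comp; lra)) as Hd.
    apply dext with (f := fun s => (comp sinh u / comp cosh u)%F s * (/ h))
      (l := ((cosh (u t) * (h / 2) * comp cosh u t - sinh (u t) * (h / 2) * comp sinh u t) /
           (comp cosh u t)²) * (/h) + ((comp sinh u / comp cosh u)%F t) * 0).
    + intros s. unfold comp, div_fct, u, tanh. field. split; auto. pose proof (cosh_pos' (h*s/2)). lra.
    + unfold comp, div_fct, u, tanh, Rsqr. unfold u in H. field. split; lra.
    + exact (dmul _ _ t _ _ Hd (dconst (/h) t)).
Qed.

Lemma dx f g t l l' : derivable_pt_lim f t l -> (forall s, f s = g s) -> l = l' -> derivable_pt_lim g t l'.
Proof. intros H E El; exact (dext f g t l l' E El H). Qed.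

Definition Dk h c s := 1 - ftime h s * h + 2 * ftime h s * c.
Definition Fp h s := (1 - h^2 * ftime h s ^2)/2.

Lemma dD h c t : derivable_pt_lim (Dk h c) t (-(Fp h t * h) + 2 * Fp h t * c).
Proof.
  pose proof (ftime_deriv h t) as Hf.
  pose proof (dadd _ _ t _ _ (dsub _ _ t _ _ (dconst 1 t) (dmul _ _ t _ _ Hf (dconst h t)))
     (dmul _ _ t _ _ (dmul _ _ t _ _ (dconst 2 t) Hf) (dconst c t))) as H.
  apply (dx _ _ _ _ _ H); [intros; reflexivity| unfold Fp; ring].
Qed.

Lemma dF h t : derivable_pt_lim (ftime h) t (Fp h t).
Proof. exact (ftime_deriv h t). Qed.

Lemma vpart_S a y k : vpart a y (S k) = vpart a y k + a k * y k.
Proof. reflexivity. Qed.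

Lemma vpart_veq n a y z k : veq n y z -> (k <= n)%nat -> vpart a y k = vpart a z k.
Proof.
  intros E; induction k; intros Hk. reflexivity.
  rewrite !vpart_S, IHk by lia. rewrite (E k) by lia. reflexivity.
Qed.

Lemma Hf_veq n a y z : veq n y z -> Hf n a y = Hf n a z.
Proof. intros E. exact (vpart_veq n a y z n E (le_n n)). Qed.

Lemma dv n a x T : ode_sol n a x T -> forall k, (k <= n)%nat -> forall t, 0 <= t <= T ->
  derivable_pt_lim (fun s => vpart a (x s) k) t
    (Hf n a (x t) * vpart a (x t) k - vpart a (x t) k ^ 2).
Proof.
  intros Hs k; induction k; intros Hk t Ht.
  - apply (dx _ _ _ _ _ (dconst 0 t)); [intros; reflexivity| unfold vpart; simpl psum; ring].
  - pose proof (IHk ltac:(lia) t Ht) as Hv.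
    pose proof (Hs t Ht k ltac:(lia)) as Hx.
    pose proof (dadd _ _ t _ _ Hv (dmul _ _ t _ _ (dconst (a k) t) Hx)) as H.
    apply (dx _ _ _ _ _ H); [intros; reflexivity|].
    unfold vfield. rewrite !vpart_S. ring.
Qed.

Lemma Hconst n a x T : ode_sol n a x T -> forall t, 0 <= t <= T -> Hf n a (x t) = Hf n a (x 0).
Proof.
  intros Hs t Ht.
  assert (G : forall t, 0 <= t <= T -> (fun s => Hf n a (x s) - Hf n a (x 0)) t = 0).
  { apply gronwall with (g := fun _ => 0).
    - intros s Hs'. pose proof (dsub _ _ s _ _ (dv n a x T Hs n (le_n n) s Hs') (dconst (Hf n a (x 0)) s)) as H.
      apply (dx _ _ _ _ _ H); [intros; reflexivity|]. unfold Hf, vpart. ring.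
    - intros; apply continuity_pt_const. intros u v; reflexivity.
    - ring. }
  specialize (G t Ht). simpl in G. lra.
Qed.

Lemma vD n a x T : ode_sol n a x T -> forall k, (k <= n)%nat -> forall t, 0 <= t <= T ->
  vpart a (x t) k * Dk (Hf n a (x 0)) (vpart a (x 0) k) t
  = vpart a (x 0) k * (1 + ftime (Hf n a (x 0)) t * Hf n a (x 0)).
Proof.
  intros Hs k Hk t Ht.
  set (h := Hf n a (x 0)). set (c := vpart a (x 0) k).
  assert (Hv : forall s, 0 <= s <= T -> derivable_pt_lim (fun s => vpart a (x s) k) s
             (h * vpart a (x s) k - vpart a (x s) k ^ 2)).
  { intros s Hs'. replace h with (Hf n a (x s)) by (unfold h; exact (Hconst n a x T Hs s Hs')). exact (dv n a x T Hs k Hk s Hs'). }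
  assert (G : forall t, 0 <= t <= T ->
     (fun s => vpart a (x s) k * Dk h c s - c * (1 + ftime h s * h)) t = 0).
  { apply gronwall with (g := fun s => h - vpart a (x s) k - h * (1 + ftime h s * h) / 2).
    - intros s Hs'.
      pose proof (dsub _ _ s _ _ (dmul _ _ s _ _ (Hv s Hs') (dD h c s))
         (dmul _ _ s _ _ (dconst c s) (dadd _ _ s _ _ (dconst 1 s) (dmul _ _ s _ _ (dF h s) (dconst h s))))) as H.
      apply (dx _ _ _ _ _ H); [intros; reflexivity|]. cbv beta. unfold Dk, Fp. field.
    - intros s Hs'.
      exact (dcont _ _ _ (dsub _ _ s _ _ (dsub _ _ s _ _ (dconst h s) (Hv s Hs'))
         (dmul _ _ s _ _ (dmul _ _ s _ _ (dconst h s) (dadd _ _ s _ _ (dconst 1 s) (dmul _ _ s _ _ (dF h s) (dconst h s)))) (dconst (/2) s)))).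
    - unfold Dk. rewrite ftime_0. unfold c. ring. }
  specialize (G t Ht). simpl in G. lra.
Qed.

Lemma xD n a x T : ode_sol n a x T -> forall i, (i < n)%nat -> forall t, 0 <= t <= T ->
  x t i * Dk (Hf n a (x 0)) (vpart a (x 0) i) t * Dk (Hf n a (x 0)) (vpart a (x 0) (S i)) t
  = x 0 i * ((1 - ftime (Hf n a (x 0)) t * Hf n a (x 0)) * (1 + ftime (Hf n a (x 0)) t * Hf n a (x 0))).
Proof.
  intros Hs i Hi t Ht.
  pose proof (vD n a x T Hs i ltac:(lia)) as R1.
  pose proof (vD n a x T Hs (S i) ltac:(lia)) as R2.
  set (h := Hf n a (x 0)) in *. set (ci := vpart a (x 0) i) in *. set (cj := vpart a (x 0) (S i)) in *.
  set (z := x 0 i).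
  assert (Hx : forall s, 0 <= s <= T -> derivable_pt_lim (fun s => x s i) s
             (x s i * ((h - vpart a (x s) (S i)) - vpart a (x s) i))).
  { intros s Hs'. replace h with (Hf n a (x s)) by (unfold h; exact (Hconst n a x T Hs s Hs')).
    exact (Hs s Hs' i Hi). }
  assert (G : forall t, 0 <= t <= T ->
     (fun s => x s i * Dk h ci s * Dk h cj s - z * ((1 - ftime h s * h) * (1 + ftime h s * h))) t = 0).
  { apply gronwall with (g := fun s => 0 - h^2 * ftime h s).
    - intros s Hs'.
      pose proof (dsub _ _ s _ _ (dmul _ _ s _ _ (dmul _ _ s _ _ (Hx s Hs') (dD h ci s)) (dD h cj s))
         (dmul _ _ s _ _ (dconst z s) (dmul _ _ s _ _
             (dsub _ _ s _ _ (dconst 1 s) (dmul _ _ s _ _ (dF h s) (dconst h s)))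
             (dadd _ _ s _ _ (dconst 1 s) (dmul _ _ s _ _ (dF h s) (dconst h s)))))) as H.
      apply (dx _ _ _ _ _ H); [intros; reflexivity|]. cbv beta.
      specialize (R1 s Hs'). specialize (R2 s Hs').
      apply Rminus_diag_uniq.
      transitivity (- x s i * (Dk h cj s * (vpart a (x s) i * Dk h ci s - ci * (1 + ftime h s * h))
                  + Dk h ci s * (vpart a (x s) (S i) * Dk h cj s - cj * (1 + ftime h s * h)))).
      + unfold Dk, Fp. field.
      + rewrite R1, R2. ring.
    - intros s Hs'.
      exact (dcont _ _ _ (dsub _ _ s _ _ (dconst 0 s) (dmul _ _ s _ _ (dconst (h^2) s) (dF h s)))).
    - unfold Dk. rewrite ftime_0. unfold z. ring. }
  specialize (G t Ht). simpl in G. apply Rminus_diag_uniq. exact G.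
Qed.

Lemma Dnz n a x T : ode_sol n a x T -> forall k, (k <= n)%nat -> forall t, 0 <= t <= T ->
  Dk (Hf n a (x 0)) (vpart a (x 0) k) t <> 0.
Proof.
  intros Hs k Hk t Ht E.
  pose proof (vD n a x T Hs k Hk t Ht) as R. rewrite E in R.
  pose proof (ftime_bound (Hf n a (x 0)) t) as B.
  assert (c0 : vpart a (x 0) k = 0).
  { assert (vpart a (x 0) k * (1 + ftime (Hf n a (x 0)) t * Hf n a (x 0)) = 0) by lra.
    apply Rmult_integral in H. destruct H; auto. lra. }
  unfold Dk in E. rewrite c0 in E. lra.
Qed.

Lemma core n a x z0 eps T : ode_sol n a x T -> 0 <= T -> veq n (x 0) z0 ->
  ftime (Hf n a z0) T = eps -> veq n (x T) (kahan eps n a z0).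
Proof.
  intros Hs T0 E0 Hf0 i Hi.
  assert (HT : 0 <= T <= T) by lra.
  pose proof (xD n a x T Hs i Hi T HT) as X.
  pose proof (Dnz n a x T Hs i ltac:(lia) T HT) as N1.
  pose proof (Dnz n a x T Hs (S i) ltac:(lia) T HT) as N2.
  rewrite (Hf_veq n a (x 0) z0 E0) in X, N1, N2.
  rewrite (vpart_veq n a (x 0) z0 i E0 ltac:(lia)) in X, N1.
  rewrite (vpart_veq n a (x 0) z0 (S i) E0 ltac:(lia)) in X, N2.
  rewrite (E0 i Hi) in X.
  unfold Dk in X, N1, N2. rewrite Hf0 in X, N1, N2.
  unfold kahan, kden. unfold Hf in *.
  apply (Rmult_eq_reg_r ((1 - eps * psum (fun j : nat => a j * z0 j) n + 2 * eps * vpart a z0 i) *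
     (1 - eps * psum (fun j : nat => a j * z0 j) n + 2 * eps * vpart a z0 (S i)))).
  2: { apply Rmult_integral_contrapositive; split; intro; [apply N1|apply N2]; lra. }
  rewrite <- Rmult_assoc, X. field. split; intro; [apply N2|apply N1]; lra.
Qed.

Lemma Fp_pos h s : 0 < Fp h s.
Proof. unfold Fp. pose proof (ftime_bound h s). nra. Qed.

Lemma ftime_pos h T : 0 < ftime h T -> 0 < T.
Proof.
  intros P. destruct (Rlt_le_dec 0 T) as [|HT]; auto. exfalso.
  destruct (Req_dec T 0) as [->|Tn]. rewrite ftime_0 in P; lra.
  destruct (MVT_cor2 (ftime h) (Fp h) T 0) as [c [Hc _]]; [lra|intros; apply dF|].
  rewrite ftime_0 in Hc. pose proof (Fp_pos h c). nra.
Qed.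

Lemma ode_mono n a x T T' : ode_sol n a x T -> T' <= T -> ode_sol n a x T'.
Proof. intros H le t Ht. apply H. lra. Qed.

Lemma ode_shift n a x T c : 0 <= c -> ode_sol n a x (T + c) -> ode_sol n a (fun s => x (s + c)) T.
Proof.
  intros c0 H t Ht i Hi.
  assert (Hsh : derivable_pt_lim (fun s => s + c) t 1).
  { apply (dx _ _ _ _ _ (dadd _ _ t _ _ (did t) (dconst c t))); [intros; reflexivity|ring]. }
  pose proof (derivable_pt_lim_comp (fun s => s + c) (fun s => x s i) t 1 _ Hsh (H (t + c) ltac:(lra) i Hi)) as D.
  apply (dx _ _ _ _ _ D); [intros; reflexivity|ring].
Qed.

Theorem mainTheorem9 (n : nat) (a : nat -> R)
  (ha : exists j, (j < n)%nat /\ a j <> 0)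
  (x0 : nat -> R) (eps teps : R) (x : R -> nat -> R)
  (heps : 0 < eps)
  (hteps : ftime (Hf n a x0) teps = eps)
  (hx0 : veq n (x 0) x0) :
  ((ode_sol n a x teps -> kahan_defined eps n a x0 ->
      veq n (x teps) (kahan eps n a x0))
  /\
  (forall m : nat, ode_sol n a x (INR m * teps) ->
      (forall k, (k < m)%nat -> kahan_defined eps n a (Nat.iter k (kahan eps n a) x0)) ->
      veq n (Nat.iter m (kahan eps n a) x0) (x (INR m * teps)))
  /\
  (ode_sol n a x teps -> kahan_defined eps n a x0 ->
    forall I, first_integral n a I -> I (kahan eps n a x0) = I x0)).
Proof.
  assert (Tp : 0 < teps) by (apply (ftime_pos (Hf n a x0)); lra).
  assert (P1 : ode_sol n a x teps -> veq n (x teps) (kahan eps n a x0)).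
  { intros Hs. apply (core n a x x0 eps teps Hs ltac:(lra) hx0 hteps). }
  split; [intros Hs _; exact (P1 Hs)|]. split.
  - induction m as [|m IH]; intros Hs Hk.
    + simpl. rewrite Rmult_0_l. intros i Hi. symmetry. apply hx0; auto.
    + assert (Hm : ode_sol n a x (INR m * teps)).
      { apply (ode_mono _ _ _ _ _ Hs). rewrite S_INR. nra. }
      assert (IH' := IH Hm (fun k l => Hk k ltac:(lia))).
      set (c := INR m * teps) in *.
      assert (c0 : 0 <= c) by (unfold c; pose proof (pos_INR m); nra).
      assert (Hs' : ode_sol n a x (teps + c)).
      { replace (teps + c) with (INR (S m) * teps) by (unfold c; rewrite S_INR; ring). exact Hs. }
      pose proof (ode_shift n a x teps c c0 Hs') as Hy.
      assert (Y0 : veq n ((fun s => x (s + c)) 0) (Nat.iter m (kahan eps n a) x0)).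
      { intros i Hi. cbv beta. rewrite Rplus_0_l. symmetry. apply IH'. exact Hi. }
      assert (HH : Hf n a (Nat.iter m (kahan eps n a) x0) = Hf n a x0).
      { rewrite <- (Hf_veq n a _ _ Y0). cbv beta. rewrite Rplus_0_l.
        rewrite (Hconst n a x (teps + c) Hs' c ltac:(lra)). apply Hf_veq. exact hx0. }
      rewrite <- HH in hteps.
      pose proof (core n a _ _ eps teps Hy ltac:(lra) Y0 hteps) as K.
      intros i Hi. simpl Nat.iter. symmetry.
      replace (INR (S m) * teps) with (teps + c) by (unfold c; rewrite S_INR; ring).
      apply K. exact Hi.
  - intros Hs _ I0 [Hv Hi].
    rewrite (Hv (kahan eps n a x0) (x teps)).
    rewrite (Hi x teps ltac:(lra) Hs). apply Hv. exact hx0.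
    intros i Hi'. symmetry. apply P1; auto.
Qed.
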